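(* Let $a\in\mathbb F^*$. For all $u\in\mathbb F^n$ and $f\in\mathcal R$ we have $\mathfrak p_a\big(u\,M^\theta_a(\overline f)\big)=\mathfrak p_a(u)\,\overline f$. Consequently, $\mathrm{im}\,M^\theta_a(\overline f)=\mathfrak v_a(\mathcal R\overline f)$, where $\mathcal R\overline f$ is the left $\mathcal R$-submodule of $\mathcal S_a$ generated by $\overline f$.
   Context: $\mathbb F$ is a finite field, $\theta\in\mathrm{Aut}(\mathbb F)$, $\mathcal R=\mathbb F[x;\theta]$ the skew polynomial ring (elements $\sum f_ix^i$ with left coefficients, $xb=\theta(b)x$). Fix $n\in\mathbb N$. $\mathcal S_a=\mathcal R/\mathcal R(x^n-a)$ is a left $\mathcal R$-module, $\overline f$ the coset of $f$; the product $\mathfrak p_a(u)\overline f$ means $\overline{pf}$ for any representative $p$ of $\mathfrak p_a(u)$. $\mathfrak p_a:\mathbb F^n\to\mathcal S_a$, $(c_0,\dots,c_{n-1})\mapsto\overline{\sum_{i=0}^{n-1}c_ix^i}$, $\mathfrak v_a=\mathfrak p_a^{-1}$. $M^\theta_a(\overline f)$ is the $n\times n$ matrix whose row with index $i$ ($0\le i\le n-1$) is $\mathfrak v_a(\overline{x^if})$; $\mathrm{im}$ denotes row space. *)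

(* Defs.v *)
(* Skew polynomial ring F[x;theta] modelled on the carrier {poly F}
   (coefficient lists, left coefficients) with an explicit skew product. *)
From HB Require Import structures.
From mathcomp Require Import all_boot all_order all_algebra all_field.
From Stdlib Require Import ClassicalEpsilon.
Set Implicit Arguments. Unset Strict Implicit. Unset Printing Implicit Defensive.
Import GRing.Theory.
Local Open Scope ring_scope.

Section Skew.
Variables (F : finFieldType) (theta : {rmorphism F -> F}).

Definition thetan (i : nat) (c : F) : F := iter i theta c.

(* skew product: (sum f_i x^i)(sum g_j x^j) = sum_k (sum_{i<=k} f_i theta^i(g_{k-i})) x^k,
   from the rule x b = theta(b) x *)
Definition skmul (f g : {poly F}) : {poly F} :=
  \poly_(k < (size f + size g)) \sum_(i < k.+1) f`_i * thetan i g`_(k - i).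

Variables (n : nat) (a : F).

Definition skmod : {poly F} := 'X^n - a%:P.

(* congruence modulo the left ideal R (x^n - a): equality of cosets in S_a *)
Definition skeq (f g : {poly F}) : Prop := exists h : {poly F}, f - g = skmul h skmod.

(* p_a : F^n -> S_a (on representatives) *)
Definition pa (u : 'rV[F]_n) : {poly F} := \sum_(i < n) u 0 i *: 'X^i.

(* v_a = p_a^{-1} : S_a -> F^n, applied to the coset of g *)
Definition va (g : {poly F}) : 'rV[F]_n :=
  epsilon (inhabits (0 : 'rV[F]_n)) (fun u => skeq (pa u) g).

Definition Mta (f : {poly F}) : 'M[F]_n :=
  \matrix_(i < n, j < n) (va (skmul 'X^i f)) 0 j.

End Skew.

Arguments skeq F theta n a f g.
Arguments pa F n u.
Arguments va F theta n a g.
Arguments Mta F theta n a f.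

(* Main.v *)
Require Import Defs.
From mathcomp Require Import all_boot all_order all_algebra all_field.
From Stdlib Require Import ClassicalEpsilon.
From mathcomp Require Import zify.
Set Implicit Arguments. Unset Strict Implicit. Unset Printing Implicit Defensive.
Import GRing.Theory.
Local Open Scope ring_scope.

Section S1.
Variables (F : finFieldType) (theta : {rmorphism F -> F}).

Lemma thetanS i c : thetan theta i.+1 c = theta (thetan theta i c).
Proof. by []. Qed.
Lemma thetan0 i : thetan theta i 0 = 0.
Proof. by elim: i => [|i IH] //; rewrite thetanS IH rmorph0. Qed.
Lemma thetan1 i : thetan theta i 1 = 1.
Proof. by elim: i => [|i IH] //; rewrite thetanS IH rmorph1. Qed.
Lemma thetanD i x y : thetan theta i (x + y) = thetan theta i x + thetan theta i y.
Proof. by elim: i => [|i IH] //; rewrite !thetanS IH rmorphD. Qed.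
Lemma thetanM i x y : thetan theta i (x * y) = thetan theta i x * thetan theta i y.
Proof. by elim: i => [|i IH] //; rewrite !thetanS IH rmorphM. Qed.
Lemma thetanN i x : thetan theta i (- x) = - thetan theta i x.
Proof. by elim: i => [|i IH] //; rewrite !thetanS IH rmorphN. Qed.

Lemma coef_skmul f g k :
  (skmul theta f g)`_k = \sum_(i < k.+1) f`_i * thetan theta i g`_(k - i).
Proof.
rewrite coef_poly; case: ltnP => // hk; rewrite big1 // => i _.
case: (ltnP i (size f)) => hi; last by rewrite nth_default // mul0r.
rewrite [g`_ _]nth_default ?thetan0 ?mulr0 //.
case: i hi => /= j Hj hj. move: hk hj. move: (size f) (size g) => s1 s2. lia.
Qed.

Lemma skmulDl f1 f2 g : skmul theta (f1 + f2) g = skmul theta f1 g + skmul theta f2 g.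
Proof.
apply/polyP => k; rewrite coefD !coef_skmul -big_split /=.
by apply: eq_bigr => i _; rewrite coefD mulrDl.
Qed.
Lemma skmulZl c f g : skmul theta (c *: f) g = c *: skmul theta f g.
Proof.
apply/polyP => k; rewrite coefZ !coef_skmul mulr_sumr.
by apply: eq_bigr => i _; rewrite coefZ mulrA.
Qed.
Lemma skmul0l g : skmul theta 0 g = 0.
Proof. by apply/polyP => k; rewrite coef_skmul coef0 big1 // => i _; rewrite coef0 mul0r. Qed.
Lemma skmulNl f g : skmul theta (- f) g = - skmul theta f g.
Proof. by rewrite -scaleN1r skmulZl scaleN1r. Qed.
Lemma skmulBl f1 f2 g : skmul theta (f1 - f2) g = skmul theta f1 g - skmul theta f2 g.
Proof. by rewrite skmulDl skmulNl. Qed.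
Lemma skmulDr f g1 g2 : skmul theta f (g1 + g2) = skmul theta f g1 + skmul theta f g2.
Proof.
apply/polyP => k; rewrite coefD !coef_skmul -big_split /=.
by apply: eq_bigr => i _; rewrite coefD thetanD mulrDr.
Qed.
Lemma skmul0r f : skmul theta f 0 = 0.
Proof. by apply/polyP => k; rewrite coef_skmul coef0 big1 // => i _; rewrite coef0 thetan0 mulr0. Qed.
Lemma skmulNr f g : skmul theta f (- g) = - skmul theta f g.
Proof.
by apply/eqP; rewrite -addr_eq0 -skmulDr addNr skmul0r.
Qed.
Lemma skmulBr f g1 g2 : skmul theta f (g1 - g2) = skmul theta f g1 - skmul theta f g2.
Proof. by rewrite skmulDr skmulNr. Qed.
Lemma skmul_suml (I : finType) (c : I -> F) (p : I -> {poly F}) g :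
  skmul theta (\sum_i c i *: p i) g = \sum_i c i *: skmul theta (p i) g.
Proof.
apply: (big_ind2 (fun x y => skmul theta x g = y)); first exact: skmul0l.
  by move=> x1 x2 y1 y2 <- <-; rewrite skmulDl.
by move=> i _; rewrite skmulZl.
Qed.

Lemma coef_skmulXn d p k :
  (skmul theta 'X^d p)`_k = if (d <= k)%N then thetan theta d p`_(k - d)%N else 0.
Proof.
rewrite coef_skmul; case: ifP => hd.
  have hd' : (d < k.+1)%N by [].
  rewrite (bigD1 (Ordinal hd')) //= big1 ?addr0; first by rewrite coefXn eqxx mul1r.
  move=> i hi; rewrite coefXn; case: eqP => [e|]; last by rewrite mul0r.
  by exfalso; move/eqP: hi; apply; apply: val_inj.
rewrite big1 // => i _; rewrite coefXn; case: eqP => [e|]; last by rewrite mul0r.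
by exfalso; have := ltn_ord i; rewrite e ltnS hd.
Qed.

Lemma skmulX_assoc h g :
  skmul theta 'X (skmul theta h g) = skmul theta (skmul theta 'X h) g.
Proof.
apply/polyP => k; rewrite -['X]expr1 coef_skmulXn [RHS]coef_skmul.
case: k => [|k] /=.
  by rewrite big_ord1 coef_skmulXn /= mul0r.
rewrite big_ord_recl coef_skmulXn /= mul0r add0r subn1 /= coef_skmul rmorph_sum.
apply: eq_bigr => i _; rewrite coef_skmulXn /= subn1 /= rmorphM.
by rewrite /bump /= add1n subSS.
Qed.

Lemma skmulX_Xn i : skmul theta ('X) ('X^i) = 'X^(i.+1).
Proof.
apply/polyP => k; rewrite -['X]expr1 coef_skmulXn !coefXn.
case: k => [|k] //=; rewrite subn1 /=.
by rewrite eqSS; case: eqP => _; rewrite ?rmorph1 ?rmorph0.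
Qed.

Lemma skmulXZ c p : skmul theta 'X (c *: p) = theta c *: skmul theta 'X p.
Proof.
apply/polyP => k; rewrite coefZ -['X]expr1 !coef_skmulXn.
by case: ifP; rewrite ?mulr0 // coefZ /= rmorphM.
Qed.

End S1.
Section S2.
Variables (F : finFieldType) (theta : {rmorphism F -> F}) (n : nat) (a : F).
Hypothesis hn : (0 < n)%N.

Local Notation m := (skmod n a).
Local Notation sk := (skmul theta).
Local Notation eqv := (skeq theta n a).

Lemma skeq_refl (p : {poly F}) : eqv p p.
Proof. by exists 0; rewrite subrr skmul0l. Qed.
Lemma skeq_sym (p q : {poly F}) : eqv p q -> eqv q p.
Proof. by case=> h e; exists (- h); rewrite skmulNl -e opprB. Qed.
Lemma skeq_trans (p q r : {poly F}) : eqv p q -> eqv q r -> eqv p r.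
Proof.
case=> h1 e1 [h2 e2]; exists (h1 + h2); rewrite skmulDl -e1 -e2.
by rewrite addrA subrK.
Qed.
Lemma skeq_lin c (p q p' q' : {poly F}) : eqv p q -> eqv p' q' -> eqv (c *: p + p') (c *: q + q').
Proof.
case=> h1 e1 [h2 e2]; exists (c *: h1 + h2); rewrite skmulDl skmulZl -e1 -e2.
by rewrite scalerBr opprD addrACA addrA.
Qed.
Lemma skeq_sum (I : finType) (c : I -> F) (p q : I -> {poly F}) :
  (forall i, eqv (p i) (q i)) -> eqv (\sum_i c i *: p i) (\sum_i c i *: q i).
Proof.
move=> H; apply: (big_ind2 eqv); first exact: skeq_refl.
  move=> x1 x2 y1 y2 e1 e2; have := skeq_lin 1 e1 e2; by rewrite !scale1r.
move=> i _; have := skeq_lin (c i) (H i) (skeq_refl 0); by rewrite !addr0.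
Qed.

Lemma coef_pa_ord (u : 'rV[F]_n) (j : 'I_n) : (pa u)`_j = u 0 j.
Proof.
rewrite /pa coef_sum (bigD1 j) //= big1 ?addr0; first by rewrite coefZ coefXn eqxx mulr1.
move=> i hi; rewrite coefZ coefXn; case: eqP => [e|]; last by rewrite mulr0.
by exfalso; move/eqP: hi; apply; apply: val_inj.
Qed.
Lemma coef_pa_ge (u : 'rV[F]_n) k : (n <= k)%N -> (pa u)`_k = 0.
Proof.
move=> hk; rewrite /pa coef_sum big1 // => i _; rewrite coefZ coefXn.
case: eqP => [e|]; last by rewrite mulr0.
by exfalso; have := ltn_ord i; rewrite -e ltnNge hk.
Qed.
Lemma size_pa (u : 'rV[F]_n) : (size (pa u) <= n)%N.
Proof. by apply/leq_sizeP => j hj; rewrite coef_pa_ge. Qed.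
Lemma pa_lin c (u v : 'rV[F]_n) : pa (c *: u + v) = c *: pa u + pa v.
Proof.
rewrite /pa scaler_sumr -big_split /=; apply: eq_bigr => i _.
by rewrite !mxE scalerDl scalerA.
Qed.
Lemma pa0 : pa (0 : 'rV[F]_n) = 0.
Proof. by rewrite /pa big1 // => i _; rewrite mxE scale0r. Qed.

Lemma pa_small (g : {poly F}) : (size g <= n)%N -> pa (\row_(j < n) g`_j) = g.
Proof.
move=> hg; apply/polyP => k; case: (ltnP k n) => hk.
  by rewrite (coef_pa_ord _ (Ordinal hk)) mxE.
by rewrite coef_pa_ge // nth_default //; apply: leq_trans hk.
Qed.

Lemma coef_m j : m`_j = (j == n)%:R - (j == 0)%:R * a.
Proof. by rewrite /skmod coefB coefXn coefC; case: (j == 0)%N; rewrite ?mul1r ?mul0r. Qed.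

Lemma div_ex s (g : {poly F}) : (size g <= s)%N -> exists u : 'rV[F]_n, eqv (pa u) g.
Proof.
elim: s g => [|s IH] g hg.
  by exists (\row_(j < n) g`_j); rewrite pa_small; [exact: skeq_refl | exact: leq_trans hg (leq0n n)].
case: (leqP (size g) s) => hs; first exact: IH.
have sg : size g = s.+1 by apply/eqP; rewrite eqn_leq hg hs.
case: (leqP (size g) n) => hgn.
  by exists (\row_(j < n) g`_j); rewrite pa_small; [exact: skeq_refl|].
have hns : (n <= s)%N by rewrite -ltnS -sg.
set d := (s - n)%N.
set g' := g - sk (g`_s *: 'X^d) m.
have hg' : (size g' <= s)%N.
  apply/leq_sizeP => j hj; rewrite /g' coefB skmulZl coefZ coef_skmulXn.
  have hdj : (d <= j)%N by rewrite /d; lia.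
  rewrite hdj coef_m.
  have -> : (j - d == 0)%N = false by apply/negbTE; rewrite /d; lia.
  rewrite mul0r subr0.
  case: (ltngtP j s) => hjs.
  - by exfalso; move: hj; rewrite leqNgt hjs.
  - rewrite nth_default ?sg //.
    have -> : (j - d == n)%N = false by apply/negbTE; rewrite /d; lia.
    by rewrite thetan0 mulr0 subrr.
  - rewrite hjs.
    have -> : (s - d == n)%N = true by apply/eqP; rewrite /d; lia.
    by rewrite thetan1 mulr1 subrr.
have [u [h e]] := IH g' hg'.
exists u; exists (h - g`_s *: 'X^d).
by rewrite skmulBl -e /g' opprB addrA addrAC addrK.
Qed.

Lemma skmod_small (h : {poly F}) : (size (sk h m) <= n)%N -> h = 0.
Proof.
move=> hs; apply/eqP/negPn/negP => hh.
have H := leq_sizeP _ _ hs.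
have hsz : (0 < size h)%N by rewrite size_poly_gt0.
set d := (size h).-1.
have := H (d + n)%N (leq_addl _ _).
rewrite coef_skmul.
have hd : (d < (d + n).+1)%N by lia.
rewrite (bigD1 (Ordinal hd)) //= big1 ?addr0.
  rewrite coef_m.
  have -> : (d + n - d == n)%N by apply/eqP; lia.
  have -> : (d + n - d == 0)%N = false by apply/negbTE; lia.
  rewrite mul0r subr0 thetan1 mulr1 => /eqP.
  have : lead_coef h != 0 by rewrite lead_coef_eq0.
  by rewrite lead_coefE -/d => /negbTE ->.
move=> i hi.
have hid : (nat_of_ord i != d) by apply: contra hi => /eqP e; apply/eqP; apply: val_inj.
case: (ltnP d i) => hdi.
  rewrite nth_default ?mul0r //; move: hdi hsz; rewrite /d.
  case: i {hi hid} => /= i _; move: (size h) => k; lia.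
rewrite coef_m.
have -> : (d + n - i == n)%N = false by apply/negbTE; move: hid hdi; case: i {hi} => /= i _; lia.
have -> : (d + n - i == 0)%N = false by apply/negbTE; move: hid hdi; case: i {hi} => /= i _; lia.
by rewrite mul0r subr0 thetan0 mulr0.
Qed.

Lemma pa_inj (u v : 'rV[F]_n) : eqv (pa u) (pa v) -> u = v.
Proof.
case=> h e.
have hs : (size (sk h m) <= n)%N.
  rewrite -e; apply: leq_trans (size_add _ _) _.
  by rewrite geq_max size_polyN !size_pa.
move: e; rewrite (skmod_small hs) skmul0l => /eqP; rewrite subr_eq0 => /eqP e.
by apply/rowP => j; rewrite -!coef_pa_ord e.
Qed.

Lemma va_spec (g : {poly F}) : eqv (pa (va theta n a g)) g.
Proof.
rewrite /va; apply: (epsilon_spec (inhabits (0 : 'rV[F]_n)) (fun u => eqv (pa u) g)).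
exact: (div_ex (leqnn _)).
Qed.
Lemma va_pa (u : 'rV[F]_n) : va theta n a (pa u) = u.
Proof. exact: pa_inj (va_spec _). Qed.
Lemma va_eq (g g' : {poly F}) : eqv g g' -> va theta n a g = va theta n a g'.
Proof.
move=> e; apply: pa_inj; apply: skeq_trans (va_spec g) _.
exact: skeq_trans e (skeq_sym (va_spec g')).
Qed.
Lemma va_lin c (g g' : {poly F}) : va theta n a (c *: g + g') = c *: va theta n a g + va theta n a g'.
Proof.
rewrite -[RHS]va_pa; apply: va_eq; apply: skeq_sym; rewrite pa_lin.
exact: skeq_lin (va_spec _) (va_spec _).
Qed.
Lemma va0 : va theta n a 0 = 0.
Proof. by rewrite -pa0 va_pa. Qed.
Lemma va_sum (I : finType) (c : I -> F) (p : I -> {poly F}) :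
  va theta n a (\sum_i c i *: p i) = \sum_i c i *: va theta n a (p i).
Proof.
apply: (big_ind2 (fun x y => va theta n a x = y)); first exact: va0.
  by move=> x1 x2 y1 y2 <- <-; have := va_lin 1 x1 y1; rewrite !scale1r.
by move=> i _; have := va_lin (c i) (p i) 0; rewrite va0 !addr0.
Qed.

End S2.
Section S3.
Variables (F : finFieldType) (theta : {rmorphism F -> F}) (n : nat) (a : F).
Hypothesis hn : (0 < n)%N.
Variable f : {poly F}.

Local Notation m := (skmod n a).
Local Notation sk := (skmul theta).
Local Notation eqv := (skeq theta n a).
Local Notation vA := (va theta n a).

Definition rr j : 'rV[F]_n := vA (sk 'X^j f).
Definition TT (u : 'rV[F]_n) : 'rV[F]_n := vA (sk 'X (pa u)).
Definition SS k : 'M[F]_(k, n) := \matrix_(i < k) rr i.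

Lemma TT_lin c u v : TT (c *: u + v) = theta c *: TT u + TT v.
Proof. by rewrite /TT pa_lin skmulDr skmulXZ (va_lin theta a hn). Qed.
Lemma TT0 : TT 0 = 0.
Proof. by rewrite /TT pa0 skmul0r (va0 theta a hn). Qed.
Lemma TT_sum (I : finType) (c : I -> F) (v : I -> 'rV[F]_n) :
  TT (\sum_i c i *: v i) = \sum_i theta (c i) *: TT (v i).
Proof.
apply: (big_ind2 (fun x y => TT x = y)); first exact: TT0.
  by move=> x1 x2 y1 y2 <- <-; have := TT_lin 1 x1 y1; rewrite rmorph1 !scale1r.
by move=> i _; have := TT_lin (c i) (v i) 0; rewrite TT0 !addr0.
Qed.
Lemma pa_sum (I : finType) (c : I -> F) (v : I -> 'rV[F]_n) :
  pa (\sum_i c i *: v i) = \sum_i c i *: pa (v i).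
Proof.
apply: (big_ind2 (fun x y => pa x = y)); first exact: pa0.
  by move=> x1 x2 y1 y2 <- <-; have := pa_lin 1 x1 y1; rewrite !scale1r.
by move=> i _; have := pa_lin (c i) (v i) 0; rewrite pa0 !addr0.
Qed.

Lemma TT_rr j : TT (rr j) = rr j.+1.
Proof.
rewrite /TT /rr; apply: (va_eq hn).
have [h e] := va_spec theta a hn (sk 'X^j f).
exists (sk 'X h).
rewrite -skmulX_assoc -e skmulBr; congr (_ - _).
by rewrite skmulX_assoc skmulX_Xn.
Qed.

Lemma rr_SS k (i : 'I_k) : (rr i <= SS k)%MS.
Proof. by rewrite -[rr i](rowK (fun i : 'I_k => rr i) i) row_sub. Qed.

Lemma SS_mono k l : (k <= l)%N -> (SS k <= SS l)%MS.
Proof.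
move=> hkl; apply/row_subP => i; rewrite rowK.
exact: (rr_SS (Ordinal (leq_trans (ltn_ord i) hkl))).
Qed.

Lemma SS_closed k : (rr k <= SS k)%MS -> forall u, (u <= SS k)%MS -> (TT u <= SS k)%MS.
Proof.
move=> hk u /submxP [w ->]; rewrite mulmx_sum_row.
under eq_bigr do rewrite rowK.
rewrite TT_sum; apply: summx_sub => i _; apply: scalemx_sub; rewrite TT_rr.
case: (ltnP i.+1 k) => hi; first exact: (rr_SS (Ordinal hi)).
have -> : i.+1 = k by apply/eqP; rewrite eqn_leq hi (ltn_ord i).
exact: hk.
Qed.

Lemma SS_stable k : (rr k <= SS k)%MS -> forall j, (rr j <= SS k)%MS.
Proof.
move=> hk j; case: (ltnP j k) => hj; first exact: (rr_SS (Ordinal hj)).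
rewrite -(subnKC hj); elim: (j - k)%N => [|t IH]; first by rewrite addn0.
by rewrite addnS -TT_rr; apply: SS_closed.
Qed.

Lemma SS_rank k : (forall i, (i < k)%N -> ~~ (rr i <= SS i)%MS) -> (k <= \rank (SS k))%N.
Proof.
elim: k => [|k IH] H //.
have := IH (fun i hi => H i (ltnW hi)) => hk.
apply: leq_ltn_trans hk _; apply: rank_ltmx; rewrite ltmxE SS_mono //=.
apply: contra (H k (ltnSn k)) => hsub.
apply: submx_trans hsub; exact: (rr_SS (@ord_max k)).
Qed.

Lemma rr_all j : (rr j <= SS n)%MS.
Proof.
case: (boolP [exists k : 'I_n, (rr k <= SS k)%MS]).
  case/existsP => k hk; apply: submx_trans (SS_stable hk j) _.
  exact: SS_mono (ltnW (ltn_ord k)).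
move=> hno; apply: submx_full; rewrite -col_leq_rank; apply: SS_rank => i hi.
by apply: contra hno => hh; apply/existsP; exists (Ordinal hi).
Qed.

Lemma SS_Mta : SS n = Mta theta n a f.
Proof. by apply/matrixP => i j; rewrite !mxE. Qed.

Lemma part1 (u : 'rV[F]_n) : eqv (pa (u *m Mta theta n a f)) (sk (pa u) f).
Proof.
rewrite -SS_Mta mulmx_sum_row; under eq_bigr do rewrite rowK.
rewrite pa_sum {2}/pa skmul_suml; apply: skeq_sum => i.
exact: (va_spec theta a hn).
Qed.

Lemma part2 v : (v <= Mta theta n a f)%MS <-> exists g : {poly F}, v = vA (sk g f).
Proof.
split.
  case/submxP => w ->; exists (pa w).
  by rewrite -(va_pa theta a hn (w *m _)); apply: (va_eq hn); exact: part1.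
case=> g ->; rewrite -(coefK g) poly_def skmul_suml (va_sum theta a hn).
apply: summx_sub => i _; apply: scalemx_sub; rewrite -SS_Mta; exact: rr_all.
Qed.

End S3.

Theorem proposition3p3 (F : finFieldType) (theta : {rmorphism F -> F})
  (htheta : bijective theta) (n : nat) (a : F) (ha : a != 0) :
  (forall (u : 'rV[F]_n) (f : {poly F}),
      skeq theta n a (pa (u *m Mta theta n a f)) (skmul theta (pa u) f)) /\
  (forall (f : {poly F}) (v : 'rV[F]_n),
      (v <= Mta theta n a f)%MS <->
      exists g : {poly F}, v = va theta n a (skmul theta g f)).
Proof.
case: n => [|n'].
  split.
    move=> u f; rewrite /pa !big_ord0 skmul0l; exact: skeq_refl.
  move=> f v; split => _; last by rewrite thinmx0 sub0mx.
  by exists 0; rewrite !thinmx0.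
have hn : (0 < n'.+1)%N by [].
split; [move=> u f; exact: part1 | move=> f v; exact: part2].
Qed.
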